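(* Let $R$ be a commutative ring and $A$ an associative unital algebra in the symmetric monoidal category of pro-$R$-modules, such that the underlying pro-$R$-module of $A$ is Mittag-Leffler. Then (1) $A$ can be represented as a cofiltered limit $A=\lim A_\alpha$ of $R$-algebras $A_\alpha$ with surjective transition maps; (2) if $A$ is pro-finite as a pro-$R$-module, the $A_\alpha$ can be chosen to be finitely generated $R$-modules; (3) if $A$ is commutative (resp. commutative and pro-finite), the $A_\alpha$ can be chosen commutative (resp. commutative and finitely generated as $R$-modules).
   Context: Pro-$R$-modules are formal cofiltered limits $\lim N_\alpha$ of $R$-modules (the pro-completion of $\mathrm{Mod}_R$), with symmetric monoidal structure $(\lim M_\alpha)\otimes(\lim N_\beta)=\lim(M_\alpha\otimes N_\beta)$. A pro-module is Mittag-Leffler if it admits a presentation $\lim N_\alpha$ with surjective transition maps (equivalently, in every presentation the images $\varphi_{\alpha\beta}(N_\beta)\subseteq N_\alpha$ stabilize as $\beta$ grows). It is pro-finite if it admits a presentation with all $N_\alpha$ finitely generated. *)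

(* Defs.v *)
(* Pro-R-modules are formalized as formal cofiltered limits
   indexed by codirected preorders; morphisms out of tensor products are
   encoded by multilinear maps (universal property of the tensor product). *)
From HB Require Import structures.
From mathcomp Require Import all_boot all_order all_algebra.
Unset Strict Implicit.
Unset Printing Implicit Defensive.
Import GRing.Theory.
Local Open Scope ring_scope.

Section ProModules.
Variable R : comPzRingType.

Record proSys := ProSys {
  idx : Type;
  le : idx -> idx -> Prop;
  le_refl : forall i, le i i;
  le_trans : forall i j k, le i j -> le j k -> le i k;
  codir : forall i j, exists k, le k i /\ le k j;
  idx_inh : inhabited idx;
  obj : idx -> lmodType R;
  tr : forall i j, le i j -> obj i -> obj j;
  tr_lin : forall i j (h : le i j) (a : R) (x y : obj i),
      tr i j h (a *: x + y) = a *: tr i j h x + tr i j h y;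
  tr_id : forall i (h : le i i) (x : obj i), tr i i h x = x;
  tr_comp : forall i j k (h1 : le i j) (h2 : le j k) (h3 : le i k) (x : obj i),
      tr j k h2 (tr i j h1 x) = tr i k h3 x
}.

Arguments le {p} i j.
Arguments obj {p} i.
Arguments tr {p i j} h x.

(** Equality of germs (equality in the colimit over the source index) of
    maps / bilinear maps / trilinear maps out of levels of [M]. *)
Definition germ1 (M : proSys) (Y : Type) (i1 i2 : idx M)
    (f1 : obj i1 -> Y) (f2 : obj i2 -> Y) : Prop :=
  exists k (h1 : le k i1) (h2 : le k i2),
    forall x : obj k, f1 (tr h1 x) = f2 (tr h2 x).

Definition germ2 (M : proSys) (Y : Type) (i1 i2 j1 j2 : idx M)
    (f1 : obj i1 -> obj i2 -> Y) (f2 : obj j1 -> obj j2 -> Y) : Prop :=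
  exists k (h1 : le k i1) (h2 : le k i2) (g1 : le k j1) (g2 : le k j2),
    forall x y : obj k, f1 (tr h1 x) (tr h2 y) = f2 (tr g1 x) (tr g2 y).

Definition germ3 (M : proSys) (Y : Type) (i1 i2 i3 j1 j2 j3 : idx M)
    (f1 : obj i1 -> obj i2 -> obj i3 -> Y)
    (f2 : obj j1 -> obj j2 -> obj j3 -> Y) : Prop :=
  exists k (h1 : le k i1) (h2 : le k i2) (h3 : le k i3)
    (g1 : le k j1) (g2 : le k j2) (g3 : le k j3),
    forall x y z : obj k,
      f1 (tr h1 x) (tr h2 y) (tr h3 z) = f2 (tr g1 x) (tr g2 y) (tr g3 z).

Arguments germ1 {M Y i1 i2} f1 f2.
Arguments germ2 {M Y i1 i2 j1 j2} f1 f2.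
Arguments germ3 {M Y i1 i2 i3 j1 j2 j3} f1 f2.

(** A morphism of pro-modules  M -> N : an element of
    lim_j colim_i Hom_R(M_i, N_j), given by representatives. *)
Record proHom (M N : proSys) := ProHom {
  hidx : idx N -> idx M;
  hmap : forall j, obj (hidx j) -> obj j;
  hmap_lin : forall j (a : R) (x y : obj (hidx j)),
      hmap j (a *: x + y) = a *: hmap j x + hmap j y;
  hmap_compat : forall j j' (h : le j' j),
      germ1 (fun x => tr h (hmap j' x)) (hmap j)
}.

Arguments hidx {M N} p j.
Arguments hmap {M N} p j x.

Definition proInverse {M N : proSys} (phi : proHom M N) (psi : proHom N M) :=
  (forall i : idx M,
     germ1 (fun x => hmap psi i (hmap phi (hidx psi i) x)) (fun x : obj i => x))
  /\ (forall j : idx N,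
     germ1 (fun x => hmap phi j (hmap psi (hidx phi j) x)) (fun x : obj j => x)).

Definition proIso (M N : proSys) : Prop :=
  exists (phi : proHom M N) (psi : proHom N M), proInverse phi psi.

Definition surj_trans (N : proSys) : Prop :=
  forall (i j : idx N) (h : le i j) (y : obj j), exists x, tr h x = y.

Definition mittag_leffler (M : proSys) : Prop :=
  exists N : proSys, surj_trans N /\ proIso M N.

Definition fin_gen (V : lmodType R) : Prop :=
  exists (n : nat) (v : 'I_n -> V),
    forall x : V, exists c : 'I_n -> R, x = \sum_(k < n) c k *: v k.

Definition pro_finite (M : proSys) : Prop :=
  exists N : proSys, (forall i : idx N, fin_gen (obj i)) /\ proIso M N.

(** Multiplication A (x) A -> A : for each d, a bilinear representative
    A_{midx d} x A_{midx d} -> A_d (diagonal indices are cofinal in idx*idx),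
    compatible in d.  Unit R -> A : a compatible family of elements. *)
Record proAlg := ProAlg {
  asys :> proSys;
  midx : idx asys -> idx asys;
  mul : forall d, obj (midx d) -> obj (midx d) -> obj d;
  mul_linl : forall d (a : R) x y z,
      mul d (a *: x + y) z = a *: mul d x z + mul d y z;
  mul_linr : forall d (a : R) x y z,
      mul d z (a *: x + y) = a *: mul d z x + mul d z y;
  mul_compat : forall d d' (h : le d' d),
      germ2 (fun x y => tr h (mul d' x y)) (mul d);
  aunit : forall d, obj d;
  aunit_compat : forall d d' (h : le d' d), tr h (aunit d') = aunit d;
  mul_assoc : forall d,
      germ3 (fun x y z => mul d (mul (midx d) x y) z)
            (fun x y z => mul d x (mul (midx d) y z));
  mul_1l : forall d,
      germ1 (fun x => mul d (aunit (midx d)) x) (fun x : obj d => x);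
  mul_1r : forall d,
      germ1 (fun x => mul d x (aunit (midx d))) (fun x : obj d => x)
}.

Arguments midx p d.
Arguments mul p d x y.
Arguments aunit p d.

Definition proAlg_comm (A : proAlg) : Prop :=
  forall d, germ2 (fun x y => mul A d x y) (fun x y => mul A d y x).

(** An R-algebra is an R-module with an
    R-bilinear, associative multiplication with a two-sided unit (the zero
    algebra is allowed, unlike MathComp's [algType], whose rings are
    nontrivial). *)
Record algSys := AlgSys {
  bidx : Type;
  ble : bidx -> bidx -> Prop;
  ble_refl : forall i, ble i i;
  ble_trans : forall i j k, ble i j -> ble j k -> ble i k;
  bcodir : forall i j, exists k, ble k i /\ ble k j;
  bidx_inh : inhabited bidx;
  balg : bidx -> lmodType R;
  bmul : forall i, balg i -> balg i -> balg i;
  bone : forall i, balg i;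
  bmul_linl : forall i (a : R) (x y z : balg i),
      bmul i (a *: x + y) z = a *: bmul i x z + bmul i y z;
  bmul_linr : forall i (a : R) (x y z : balg i),
      bmul i z (a *: x + y) = a *: bmul i z x + bmul i z y;
  bmul_assoc : forall i (x y z : balg i),
      bmul i (bmul i x y) z = bmul i x (bmul i y z);
  bmul_1l : forall i (x : balg i), bmul i (bone i) x = x;
  bmul_1r : forall i (x : balg i), bmul i x (bone i) = x;
  btr : forall i j, ble i j -> balg i -> balg j;
  btr_lin : forall i j (h : ble i j) (a : R) (x y : balg i),
      btr i j h (a *: x + y) = a *: btr i j h x + btr i j h y;
  btr_mul : forall i j (h : ble i j) (x y : balg i),
      btr i j h (bmul i x y) = bmul j (btr i j h x) (btr i j h y);
  btr_one : forall i j (h : ble i j), btr i j h (bone i) = bone j;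
  btr_id : forall i (h : ble i i) (x : balg i), btr i i h x = x;
  btr_comp : forall i j k (h1 : ble i j) (h2 : ble j k) (h3 : ble i k)
      (x : balg i), btr j k h2 (btr i j h1 x) = btr i k h3 x
}.

Arguments btr {_ _ _} _ _.

Definition sysOf (B : algSys) : proSys :=
  @ProSys (bidx B) (@ble B) (@ble_refl B) (@ble_trans B) (@bcodir B)
    (@bidx_inh B) (balg B) (fun i j h => btr h)
    (@btr_lin B) (@btr_id B) (@btr_comp B).

Definition alg_surj (B : algSys) : Prop :=
  forall i j (h : ble B i j) (y : balg B j), exists x, btr h x = y.

Definition alg_fin_gen (B : algSys) : Prop :=
  forall i, fin_gen (balg B i).

Definition alg_comm (B : algSys) : Prop :=
  forall i (x y : balg B i), bmul B i x y = bmul B i y x.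

Definition proAlgIso (A : proAlg) (B : algSys) : Prop :=
  exists (phi : proHom A (sysOf B)) (psi : proHom (sysOf B) A),
    proInverse phi psi
    /\ (forall j : bidx B,
          germ2 (fun x y => (hmap phi j (mul A (hidx phi j) x y) : balg B j))
                (fun x y => bmul B j (hmap phi j x) (hmap phi j y)))
    /\ (forall j : bidx B, (hmap phi j (aunit A (hidx phi j)) : balg B j) = bone B j).

End ProModules.

Arguments asys {R} p.
Arguments mittag_leffler {R} M.
Arguments pro_finite {R} M.
Arguments proAlg_comm {R} A.
Arguments alg_surj {R} B.
Arguments alg_fin_gen {R} B.
Arguments alg_comm {R} B.
Arguments proAlgIso {R} A B.

(* Main.v *)
From HB Require Import structures.
From mathcomp Require Import all_boot all_order all_algebra.
From mathcomp Require Import boolp classical_sets functions.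
Require Import Defs.
Import GRing.Theory.
Local Open Scope ring_scope.
Set Implicit Arguments.
Unset Strict Implicit.

Section SubmodP.
Variables (R : pzRingType) (V : lmodType R) (P : V -> Prop).
Hypothesis P0 : P 0.
Hypothesis Plin : forall a u v, P u -> P v -> P (a *: u + v).
Definition Spred : pred V := fun v => `[< P v >].
Record subm := Subm { smv : V; sprop : Spred smv }.
HB.instance Definition _ := [isSub for smv].
HB.instance Definition _ := [Choice of subm by <:].
Lemma Spred_closed : submod_closed Spred.
Proof.
split; first by apply/asboolP.
by move=> a u v /asboolP Pu /asboolP Pv; apply/asboolP; apply: Plin.
Qed.
HB.instance Definition _ := GRing.isSubmodClosed.Build R V Spred Spred_closed.
HB.instance Definition _ := [SubChoice_isSubLmodule of subm by <:].
Definition submLmod : lmodType R := subm.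
End SubmodP.
Arguments submLmod {R V P} P0 Plin.

Section Lin.
Variables (R : pzRingType) (U V : lmodType R) (f : U -> V).
Hypothesis Hf : forall a x y, f (a *: x + y) = a *: f x + f y.
Lemma linD x y : f (x + y) = f x + f y.
Proof. by rewrite -[x]scale1r Hf !scale1r. Qed.
Lemma lin0 : f 0 = 0.
Proof.
have := linD 0 0; rewrite addr0 => /(congr1 (fun z => z - f 0)).
by rewrite subrr addrK.
Qed.
Lemma linZ a x : f (a *: x) = a *: f x.
Proof. by rewrite -[a *: x]addr0 Hf lin0 addr0. Qed.
Lemma linN x : f (- x) = - f x.
Proof. by rewrite -scaleN1r linZ scaleN1r. Qed.
Lemma linB x y : f (x - y) = f x - f y.
Proof. by rewrite linD linN. Qed.
Lemma lin_sum n (c : 'I_n -> R) (v : 'I_n -> U) :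
  f (\sum_(k < n) c k *: v k) = \sum_(k < n) c k *: f (v k).
Proof.
elim: n c v => [|n IH] c v; first by rewrite !big_ord0 lin0.
by rewrite !big_ord_recl Hf IH.
Qed.
End Lin.

Definition epsl {T : Type} (d : T) (P : T -> Prop) : T :=
  match pselect (exists z, P z) with left h => proj1_sig (cid h) | right _ => d end.
Lemma epslP T (d : T) (P : T -> Prop) : (exists z, P z) -> P (epsl d P).
Proof. by move=> h; rewrite /epsl; case: pselect => [h'|//]; case: (cid h'). Qed.

Section Main.
Variable R : comPzRingType.
Variable A : proAlg R.
Notation M := (asys A).
Notation I := (idx R M).
Notation Ob i := (obj R M i).
Notation lev := (Defs.le R M).
Notation mu := (mul R A).
Notation mi := (midx R A).
Notation un := (aunit R A).

Lemma levR i : lev i i. Proof. exact: Defs.le_refl. Qed.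
Lemma levT i j k : lev i j -> lev j k -> lev i k. Proof. exact: Defs.le_trans. Qed.
Hint Resolve levR : core.

Definition trp (i j : I) (x : Ob i) : Ob j :=
  match pselect (lev i j) with left h => tr R M i j h x | right _ => 0 end.
Arguments trp : clear implicits.

Lemma trpE i j (h : lev i j) x : trp i j x = tr R M i j h x.
Proof. by rewrite /trp; case: pselect => [h'|//]; rewrite (Prop_irrelevance h' h). Qed.

Lemma trp_lin i j a x y : trp i j (a *: x + y) = a *: trp i j x + trp i j y.
Proof. by rewrite /trp; case: pselect => h; [rewrite tr_lin | rewrite scaler0 addr0]. Qed.

Lemma trp_id i x : trp i i x = x.
Proof. by rewrite (trpE (levR i)) tr_id. Qed.

Lemma trp_comp i j k x : lev i j -> lev j k -> trp j k (trp i j x) = trp i k x.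
Proof. move=> h1 h2; rewrite (trpE h1) (trpE h2) (trpE (levT h1 h2)). exact: (tr_comp R M i j k h1 h2 (levT h1 h2) x). Qed.

Definition trpD i j := linD (@trp_lin i j).
Definition trpB i j := linB (@trp_lin i j).
Definition trp0 i j := lin0 (@trp_lin i j).
Definition trpZ i j := linZ (@trp_lin i j).

Lemma un_trp d' d : lev d' d -> trp d' d (un d') = un d.
Proof. by move=> h; rewrite (trpE h) aunit_compat. Qed.

Lemma mul_linl' d z : forall a x y, mu d (a *: x + y) z = a *: mu d x z + mu d y z.
Proof. by move=> a x y; rewrite mul_linl. Qed.
Lemma mul_linr' d z : forall a x y, mu d z (a *: x + y) = a *: mu d z x + mu d z y.
Proof. by move=> a x y; rewrite mul_linr. Qed.

Definition cb (i j : I) : I := proj1_sig (cid (Defs.codir R M i j)).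
Lemma cb_l i j : lev (cb i j) i. Proof. by rewrite /cb; case: cid => k []. Qed.
Lemma cb_r i j : lev (cb i j) j. Proof. by rewrite /cb; case: cid => k []. Qed.

Definition deep (P : I -> Prop) := exists k0, forall p, lev p k0 -> P p.
Lemma deep_and (P Q : I -> Prop) : deep P -> deep Q -> deep (fun p => P p /\ Q p).
Proof.
move=> [k1 H1] [k2 H2]; exists (cb k1 k2) => p hp; split.
  by apply: H1; apply: levT hp (cb_l _ _).
by apply: H2; apply: levT hp (cb_r _ _).
Qed.
Lemma deep_le i : deep (fun p => lev p i).
Proof. by exists i. Qed.
Lemma deep_get P : deep P -> exists p, P p.
Proof. by move=> [k H]; exists k; apply: H. Qed.
Lemma deep_impl (P Q : I -> Prop) : deep P -> (forall p, P p -> Q p) -> deep Q.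
Proof. by move=> [k H] HPQ; exists k => p hp; apply: HPQ; apply: H. Qed.

Lemma compat_deep d' d : lev d' d -> deep (fun p => lev p (mi d') /\ lev p (mi d) /\
  forall a b : Ob p, trp d' d (mu d' (trp p (mi d') a) (trp p (mi d') b))
                   = mu d (trp p (mi d) a) (trp p (mi d) b)).
Proof.
move=> h; have [k [h1 [h2 [g1 [g2 E]]]]] := mul_compat R A d d' h.
rewrite (Prop_irrelevance h2 h1) (Prop_irrelevance g2 g1) in E.
exists k => p hp; split; first exact: levT hp h1.
split; first exact: levT hp g1.
move=> a b.
rewrite -(trp_comp a hp h1) -(trp_comp b hp h1) -(trp_comp a hp g1) -(trp_comp b hp g1).
by rewrite (trpE h) !(trpE h1) !(trpE g1) E.
Qed.

Lemma assoc_deep d : deep (fun p => lev p (mi (mi d)) /\ lev p (mi d) /\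
  forall a b c : Ob p,
    mu d (mu (mi d) (trp p _ a) (trp p _ b)) (trp p (mi d) c)
  = mu d (trp p (mi d) a) (mu (mi d) (trp p _ b) (trp p _ c))).
Proof.
have [k [h1 [h2 [h3 [g1 [g2 [g3 E]]]]]]] := mul_assoc R A d.
rewrite (Prop_irrelevance h2 h1) (Prop_irrelevance g2 h1) (Prop_irrelevance g3 h1)
  (Prop_irrelevance g1 h3) in E.
exists k => p hp; split; first exact: levT hp h1.
split; first exact: levT hp h3.
move=> a b c.
rewrite -(trp_comp a hp h1) -(trp_comp b hp h1) -(trp_comp c hp h3).
rewrite -(trp_comp a hp h3) -(trp_comp c hp h1).
by rewrite !(trpE h1) !(trpE h3) E.
Qed.

Lemma unitl_deep d : deep (fun p => lev p (mi d) /\ lev p d /\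
  forall a : Ob p, mu d (un (mi d)) (trp p (mi d) a) = trp p d a).
Proof.
have [k [h1 [h2 E]]] := mul_1l R A d.
exists k => p hp; split; first exact: levT hp h1.
split; first exact: levT hp h2.
by move=> a; rewrite -(trp_comp a hp h1) -(trp_comp a hp h2) (trpE h1) (trpE h2) E.
Qed.

Lemma unitr_deep d : deep (fun p => lev p (mi d) /\ lev p d /\
  forall a : Ob p, mu d (trp p (mi d) a) (un (mi d)) = trp p d a).
Proof.
have [k [h1 [h2 E]]] := mul_1r R A d.
exists k => p hp; split; first exact: levT hp h1.
split; first exact: levT hp h2.
by move=> a; rewrite -(trp_comp a hp h1) -(trp_comp a hp h2) (trpE h1) (trpE h2) E.
Qed.

Lemma comm_deep d : proAlg_comm A -> deep (fun p => lev p (mi d) /\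
  forall a b : Ob p, mu d (trp p (mi d) a) (trp p (mi d) b)
                   = mu d (trp p (mi d) b) (trp p (mi d) a)).
Proof.
move=> C; have [k [h1 [h2 [g1 [g2 E]]]]] := C d.
rewrite (Prop_irrelevance h2 h1) (Prop_irrelevance g2 h1) (Prop_irrelevance g1 h1) in E.
exists k => p hp; split; first exact: levT hp h1.
move=> a b.
rewrite -(trp_comp a hp h1) -(trp_comp b hp h1).
by rewrite !(trpE h1) E.
Qed.


Lemma ML_s : mittag_leffler M -> exists s : I -> I, (forall i, lev (s i) i) /\
  (forall i k, lev k (s i) -> forall z : Ob (s i), exists w : Ob k, trp k i w = trp (s i) i z).
Proof.
move=> [N [Nsurj [phi [psi [inv1 _]]]]].
have : forall i, exists k, lev k i /\ forall k', lev k' k -> forall z : Ob k,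
    exists w : Ob k', trp k' i w = trp k i z.
  move=> i; have [k [h1 [h2 Hk]]] := inv1 i.
  exists k; split => // k' hk' z.
  have hk'i : lev k' i := levT hk' h2.
  have [m [g1 [g2 Hm]]] := hmap_compat R N M psi i k' hk'i.
  have [v ev] := Nsurj m _ g2 (hmap R M N phi _ (tr R M _ _ h1 z)).
  exists (hmap R N M psi k' (tr R N _ _ g1 v)).
  by rewrite (trpE hk'i) Hm ev (trpE h2) -Hk.
move=> /choice [s Hs]; exists s; split => i; first exact: (Hs i).1.
exact: (Hs i).2.
Qed.

Variable s : I -> I.
Hypothesis s_le : forall i, lev (s i) i.
Hypothesis s_stab : forall i k, lev k (s i) -> forall z : Ob (s i),
  exists w : Ob k, trp k i w = trp (s i) i z.
Hint Resolve s_le cb_l cb_r : core.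

Definition E i (x : Ob i) : Prop := exists z : Ob (s i), trp (s i) i z = x.

Lemma E_lift i p x : E x -> lev p i -> exists z : Ob p, E z /\ trp p i z = x.
Proof.
move=> [z0 <-] hpi.
have [w Hw] := s_stab (cb_r (s p) (s i)) z0.
exists (trp (cb (s p) (s i)) p w); split.
  by exists (trp (cb (s p) (s i)) (s p) w); rewrite trp_comp.
by rewrite trp_comp //; apply: levT (cb_l _ _) (s_le p).
Qed.

Lemma E_tr j i (z : Ob j) : E z -> lev j i -> E (trp j i z).
Proof.
move=> Ez hji.
have hq : lev (cb (s j) (s i)) j by apply: levT (cb_l _ _) (s_le j).
have [w [_ Hw]] := E_lift Ez hq.
exists (trp (cb (s j) (s i)) (s i) w).
by rewrite trp_comp // -Hw trp_comp.
Qed.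

Lemma E_0 i : E (0 : Ob i).
Proof. by exists 0; rewrite trp0. Qed.

Lemma E_lin i a (x y : Ob i) : E x -> E y -> E (a *: x + y).
Proof. by move=> [z1 <-] [z2 <-]; exists (a *: z1 + z2); rewrite trp_lin. Qed.

Lemma E_un d : E (un d).
Proof. by exists (un (s d)); rewrite un_trp. Qed.

Lemma E_mul d (x y : Ob (mi d)) : E x -> E y -> E (mu d x y).
Proof.
move=> Ex Ey.
have [p [hp1 [hp2 Hc]]] := deep_get (compat_deep (s_le d)).
have [a [_ <-]] := E_lift Ex hp2; have [b [_ <-]] := E_lift Ey hp2.
by exists (mu (s d) (trp p (mi (s d)) a) (trp p (mi (s d)) b)); apply: Hc.
Qed.

Definition t d := cb d (cb (mi d) (mi (mi d))).
Lemma t_d d : lev (t d) d. Proof. exact: cb_l. Qed.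
Lemma t_md d : lev (t d) (mi d). Proof. exact: levT (cb_r _ _) (cb_l _ _). Qed.
Lemma t_mmd d : lev (t d) (mi (mi d)). Proof. exact: levT (cb_r _ _) (cb_r _ _). Qed.
Hint Resolve t_d t_md t_mmd : core.

Definition T d (y x w : Ob (t d)) : Ob d :=
  mu d (mu (mi d) (trp (t d) (mi (mi d)) y) (trp (t d) (mi (mi d)) x)) (trp (t d) (mi d) w).

Lemma T_deep d p (a b c : Ob p) : lev p (t d) ->
  T (trp p (t d) a) (trp p (t d) b) (trp p (t d) c)
  = mu d (mu (mi d) (trp p _ a) (trp p _ b)) (trp p (mi d) c).
Proof.
move=> hp; rewrite /T !trp_comp //; exact: levT hp _.
Qed.

Lemma T_linx d (y w : Ob (t d)) a x x' :
  T y (a *: x + x') w = a *: T y x w + T y x' w.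
Proof. by rewrite /T trp_lin mul_linr mul_linl. Qed.

Definition Dom d := ({y : Ob (t d) | E y} * {w : Ob (t d) | E w})%type.
Definition Phi d (x : Ob (t d)) : Dom d -> Ob d :=
  fun pr => T (proj1_sig pr.1) x (proj1_sig pr.2).

Lemma Phi_lin d a (x y : Ob (t d)) : Phi (a *: x + y) = a *: Phi x + Phi y.
Proof. by apply/funext => pr; rewrite /Phi T_linx. Qed.

Definition Pd d (f : Dom d -> Ob d) : Prop := exists x, E x /\ f = Phi x.
Lemma Pd0 d : Pd (0 : Dom d -> Ob d).
Proof. by exists 0; split; [exact: E_0 | rewrite (lin0 (@Phi_lin d))]. Qed.
Lemma PdLin d a u v : Pd u -> Pd v -> Pd (a *: u + v :> (Dom d -> Ob d)).
Proof.
move=> [x1 [E1 ->]] [x2 [E2 ->]]; exists (a *: x1 + x2); split.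
  exact: E_lin.
by rewrite Phi_lin.
Qed.

Definition Bm d : lmodType R := submLmod (@Pd0 d) (@PdLin d).
Definition phiB d (x : Ob (t d)) : Bm d := insubd (0 : Bm d) (Phi x).

Lemma val_phiB d (x : Ob (t d)) : E x -> val (phiB x) = Phi x.
Proof. by move=> Ex; rewrite /phiB insubdK //; apply/asboolP; exists x. Qed.

Lemma Bm_rep d (f : Bm d) : exists x, E x /\ f = phiB x.
Proof.
have /asboolP [x [Ex Hf]] := valP f.
by exists x; split => //; apply: val_inj; rewrite val_phiB.
Qed.

Lemma phiB_lin d a (x y : Ob (t d)) : E x -> E y ->
  phiB (a *: x + y) = a *: phiB x + phiB y.
Proof.
move=> Ex Ey; apply: val_inj.
rewrite val_phiB; last exact: E_lin.
by rewrite /= !val_phiB // Phi_lin.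
Qed.

Lemma phiB_eq d (x y : Ob (t d)) : E x -> E y -> Phi x = Phi y -> phiB x = phiB y.
Proof. by move=> Ex Ey H; apply: val_inj; rewrite !val_phiB. Qed.

Lemma Bm_deep d (f : Bm d) p : lev p (t d) ->
  exists z : Ob p, E z /\ f = phiB (trp p (t d) z).
Proof.
move=> hp; have [x [Ex ->]] := Bm_rep f.
by have [z [Ez <-]] := E_lift Ex hp; exists z.
Qed.


Lemma Phi_at d (x y w : Ob (t d)) (Ey : E y) (Ew : E w) :
  Phi x (exist _ y Ey, exist _ w Ew) = T y x w.
Proof. by []. Qed.

Lemma Phi_ext d (x x' : Ob (t d)) :
  (forall y w, E y -> E w -> T y x w = T y x' w) -> Phi x = Phi x'.
Proof. by move=> H; apply/funext => -[[y Ey] [w Ew]]; rewrite /Phi /= H. Qed.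

Lemma Phi0_at d (x y w : Ob (t d)) : E y -> E w -> Phi x = 0 -> T y x w = 0.
Proof. by move=> Ey Ew /(congr1 (fun f => f (exist _ y Ey, exist _ w Ew))). Qed.

Lemma T_compat d' d : lev d' d -> deep (fun p => lev p (t d') /\ lev p (t d) /\
  forall a b c : Ob p,
    trp d' d (T (trp p (t d') a) (trp p (t d') b) (trp p (t d') c))
    = T (trp p (t d) a) (trp p (t d) b) (trp p (t d) c)).
Proof.
move=> h.
have [j [hj1 [hj2 Hcj]]] := deep_get (compat_deep h).
eapply deep_impl; first exact: (deep_and (compat_deep hj1) (deep_and (compat_deep hj2)
  (deep_and (deep_le j) (deep_and (deep_le (t d')) (deep_le (t d)))))).
move=> p [[_ [_ C1]] [[_ [_ C2]] [hpj [hp1 hp2]]]].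
split => //; split => // a b c.
rewrite !T_deep // -C1 -C2.
rewrite -(trp_comp c hpj hj1) -(trp_comp c hpj hj2).
exact: Hcj.
Qed.

Lemma C_lem d' d : lev d' d -> deep (fun p => lev p (t d') /\ lev p (t d) /\
  forall z : Ob p, Phi (trp p (t d') z) = 0 -> Phi (trp p (t d) z) = 0).
Proof.
move=> h; eapply deep_impl; first exact: (T_compat h).
move=> p [hp1 [hp2 HT]].
split => //; split => // z Hz.
apply/funext => -[[y Ey] [w Ew]].
change (T y (trp p (t d) z) w = 0).
have [a [Ea ea]] := E_lift Ey hp2; have [c [Ec ec]] := E_lift Ew hp2.
rewrite -ea -ec -HT (Phi0_at _ _ Hz) ?trp0 //; exact: E_tr.
Qed.


Lemma I12 d : deep (fun p => lev p (t d) /\ lev p (mi (t d)) /\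
  forall a b c e : Ob p,
   T (trp p (t d) a) (mu (t d) (trp p (mi (t d)) b) (trp p (mi (t d)) c)) (trp p (t d) e)
   = T (trp p (t d) a) (trp p (t d) b) (mu (t d) (trp p (mi (t d)) c) (trp p (mi (t d)) e))
  /\
   T (trp p (t d) a) (mu (t d) (trp p (mi (t d)) b) (trp p (mi (t d)) c)) (trp p (t d) e)
   = T (mu (t d) (trp p (mi (t d)) a) (trp p (mi (t d)) b)) (trp p (t d) c) (trp p (t d) e)).
Proof.
have [j [hj1 [hj2 Aj]]] := deep_get (assoc_deep d).
eapply deep_impl; first exact: (deep_and (compat_deep (t_mmd d))
  (deep_and (compat_deep (t_md d)) (deep_and (assoc_deep (mi d))
  (deep_and (compat_deep hj1) (deep_and (compat_deep hj2)
  (deep_and (deep_le j) (deep_le (t d)))))))).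
move=> p [[hp1 [_ F1]] [[_ [_ F2]] [[_ [_ F3]] [[_ [_ F4]] [[_ [_ F5]] [hpj hpt]]]]]].
split => //; split => // a b c e.
have L : T (trp p (t d) a) (mu (t d) (trp p (mi (t d)) b) (trp p (mi (t d)) c)) (trp p (t d) e)
  = mu d (mu (mi d) (mu (mi (mi d)) (trp p (mi (mi (mi d))) a) (trp p (mi (mi (mi d))) b))
         (trp p (mi (mi d)) c)) (trp p (mi d) e).
  by rewrite /T !trp_comp // F1 -F3.
split; last by rewrite L /T !trp_comp // F1.
rewrite L /T !trp_comp // F2 -F4.
by rewrite -(trp_comp c hpj hj1) -(trp_comp e hpj hj2) Aj !trp_comp // F5.
Qed.


Lemma E_sub i (x y : Ob i) : E x -> E y -> E (x - y).
Proof.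
move=> Ex Ey; have := E_lin (-1) Ey Ex.
by rewrite scaleN1r addrC.
Qed.

Lemma E_trm d p (a b : Ob p) : E a -> E b -> lev p (mi d) -> E (mu d (trp p (mi d) a) (trp p (mi d) b)).
Proof. by move=> Ea Eb h; apply: E_mul; apply: E_tr. Qed.

Lemma Phi_diff d (x y : Ob (t d)) : Phi (x - y) = 0 -> Phi x = Phi y.
Proof. by rewrite (linB (@Phi_lin d)) => /eqP; rewrite subr_eq0 => /eqP. Qed.

Lemma Phi_of_B d (f : Bm d) x y : E x -> E y -> f = phiB x -> f = phiB y -> Phi x = Phi y.
Proof. by move=> Ex Ey hx hy; rewrite -!val_phiB // -hx -hy. Qed.

Lemma W_lem d : deep (fun p => lev p (t d) /\ lev p (mi (t d)) /\
  forall z z' : Ob p, E z -> E z' -> Phi (trp p (t d) z) = 0 ->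
    Phi (mu (t d) (trp p (mi (t d)) z) (trp p (mi (t d)) z')) = 0 /\
    Phi (mu (t d) (trp p (mi (t d)) z') (trp p (mi (t d)) z)) = 0).
Proof.
eapply deep_impl; first exact: (I12 d).
move=> p [hp1 [hp2 HI]]; split => //; split => // z z' Ez Ez' Hz.
split; apply/funext => -[[y Ey] [w Ew]].
  change (T y (mu (t d) (trp p (mi (t d)) z) (trp p (mi (t d)) z')) w = 0).
  have [a [Ea ea]] := E_lift Ey hp1; have [e [Ee ee]] := E_lift Ew hp1.
  rewrite -ea -ee (HI a z z' e).1; apply: (Phi0_at _ _ Hz); first exact: E_tr.
  exact: E_trm.
change (T y (mu (t d) (trp p (mi (t d)) z') (trp p (mi (t d)) z)) w = 0).
have [a [Ea ea]] := E_lift Ey hp1; have [e [Ee ee]] := E_lift Ew hp1.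
rewrite -ea -ee (HI a z' z e).2; apply: (Phi0_at _ _ Hz); first exact: E_trm.
exact: E_tr.
Qed.

Lemma Phi_un d (x : Ob (t d)) : E x -> T (un (t d)) x (un (t d)) = trp (t d) d x.
Proof.
move=> Ex.
have [p [[hl1 [hl2 UL]] [[hr1 [hr2 UR]] hpt]]] :=
  deep_get (deep_and (unitl_deep (mi d)) (deep_and (unitr_deep d) (deep_le (t d)))).
have [z [Ez <-]] := E_lift Ex hpt.
by rewrite /T !trp_comp // !un_trp // UL UR.
Qed.

Definition qd d := cb (t d) (mi (t d)).
Lemma qd_t d : lev (qd d) (t d). Proof. exact: cb_l. Qed.
Lemma qd_mt d : lev (qd d) (mi (t d)). Proof. exact: cb_r. Qed.
Hint Resolve qd_t qd_mt : core.

Definition liftE p i (x : Ob i) : Ob p := epsl 0 (fun z => E z /\ trp p i z = x).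
Arguments liftE : clear implicits.
Lemma liftE_spec p i (x : Ob i) : E x -> lev p i ->
  E (liftE p i x) /\ trp p i (liftE p i x) = x.
Proof. by move=> Ex h; exact: (@epslP _ 0 (fun z => E z /\ trp p i z = x) (E_lift Ex h)). Qed.

Definition rep d (f : Bm d) : Ob (t d) := epsl 0 (fun x => E x /\ f = phiB x).
Lemma rep_spec d (f : Bm d) : E (rep f) /\ f = phiB (rep f).
Proof. exact: (@epslP _ 0 (fun x => E x /\ f = phiB x) (Bm_rep f)). Qed.

Definition bmul d (f g : Bm d) : Bm d :=
  phiB (mu (t d) (trp (qd d) (mi (t d)) (liftE (qd d) (t d) (rep f)))
                 (trp (qd d) (mi (t d)) (liftE (qd d) (t d) (rep g)))).
Definition bone d : Bm d := phiB (un (t d)).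
Definition rr d' d := cb (t d') (t d).
Definition btrB d' d (f : Bm d') : Bm d :=
  phiB (trp (rr d' d) (t d) (liftE (rr d' d) (t d') (rep f))).
Arguments btrB : clear implicits.

Lemma cmp_rep d q p (z : Ob q) (x : Ob (t d)) (f : Bm d) :
  lev q (t d) -> lev p q -> E z -> E x -> f = phiB (trp q (t d) z) -> f = phiB x ->
  forall l (hl : lev l (t d)) (zh : Ob l), lev p l -> E zh -> trp l (t d) zh = x ->
  exists w wh : Ob p, [/\ E w, E wh, trp p q w = z, trp p l wh = zh &
     Phi (trp p (t d) (wh - w)) = 0].
Proof.
move=> hq hpq Ez Ex f1 f2 l hl zh hpl Ezh ezh.
have [w [Ew ew]] := E_lift Ez hpq; have [wh [Ewh ewh]] := E_lift Ezh hpl.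
exists w, wh; split => //.
rewrite (linB (@trp_lin p (t d))) (linB (@Phi_lin d)).
have hpt : lev p (t d) by apply: levT hpq hq.
rewrite -(trp_comp w hpq hq) -(trp_comp wh hpl hl) ew ewh ezh.
rewrite (Phi_of_B _ _ f2 f1) ?subrr //; exact: E_tr.
Qed.

Lemma Rm d q (z1 z2 : Ob q) : lev q (t d) -> lev q (mi (t d)) -> E z1 -> E z2 ->
  bmul (phiB (trp q (t d) z1)) (phiB (trp q (t d) z2))
  = phiB (mu (t d) (trp q (mi (t d)) z1) (trp q (mi (t d)) z2)).
Proof.
move=> hq hqm Ez1 Ez2.
set f1 := phiB (trp q (t d) z1); set f2 := phiB (trp q (t d) z2).
have [Ex1 ex1] := rep_spec f1; have [Ex2 ex2] := rep_spec f2.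
have [El1 el1] := liftE_spec Ex1 (qd_t d); have [El2 el2] := liftE_spec Ex2 (qd_t d).
have [p [[hp1 [hp2 HW]] [hpq hpqd]]] :=
  deep_get (deep_and (W_lem d) (deep_and (deep_le q) (deep_le (qd d)))).
have [w1 [wh1 [Ew1 Ewh1 ew1 ewh1 D1]]] :=
  cmp_rep hq hpq Ez1 Ex1 (erefl f1) ex1 (qd_t d) hpqd El1 el1.
have [w2 [wh2 [Ew2 Ewh2 ew2 ewh2 D2]]] :=
  cmp_rep hq hpq Ez2 Ex2 (erefl f2) ex2 (qd_t d) hpqd El2 el2.
rewrite /bmul -ewh1 -ewh2 -ew1 -ew2 !trp_comp //.
apply: phiB_eq; try by apply: E_trm.
have [H1 _] := HW _ wh2 (E_sub Ewh1 Ew1) Ewh2 D1.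
have [_ H2] := HW _ w1 (E_sub Ewh2 Ew2) Ew1 D2.
move: H1 H2.
rewrite !(linB (@trp_lin p (mi (t d)))).
rewrite (linB (@mul_linl' (t d) _)) (linB (@mul_linr' (t d) _)).
move=> /Phi_diff -> /Phi_diff ->.
all: by [].
Qed.

Lemma Tr d' d (h : lev d' d) q (z : Ob q) : lev q (t d') -> lev q (t d) -> E z ->
  btrB d' d (phiB (trp q (t d') z)) = phiB (trp q (t d) z).
Proof.
move=> hq1 hq2 Ez.
set f := phiB (trp q (t d') z).
have [Ex ex] := rep_spec f.
have [El el] := liftE_spec Ex (cb_l (t d') (t d)).
have [p [[hp1 [hp2 HC]] [hpq hpr]]] :=
  deep_get (deep_and (C_lem h) (deep_and (deep_le q) (deep_le (rr d' d)))).
have [w [wh [Ew Ewh ew ewh D]]] :=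
  cmp_rep hq1 hpq Ez Ex (erefl f) ex (cb_l (t d') (t d)) hpr El el.
rewrite /btrB -ewh -ew !trp_comp //; last exact: cb_r.
apply: phiB_eq; try by apply: E_tr.
apply: Phi_diff; rewrite -(linB (@trp_lin p (t d))).
exact: HC.
Qed.


Ltac es := solve [ by apply: E_tr | by apply: E_trm | by apply: E_lin | by apply: E_un | by [] ].

Lemma bmul_linl d a (x y z : Bm d) : bmul (a *: x + y) z = a *: bmul x z + bmul y z.
Proof.
have [zx [Ex ->]] := Bm_deep x (qd_t d); have [zy [Ey ->]] := Bm_deep y (qd_t d).
have [zz [Ez ->]] := Bm_deep z (qd_t d).
rewrite -phiB_lin; try es.
rewrite -trp_lin !Rm; try es.
rewrite -phiB_lin; try es.
by rewrite trp_lin mul_linl.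
Qed.

Lemma bmul_linr d a (x y z : Bm d) : bmul z (a *: x + y) = a *: bmul z x + bmul z y.
Proof.
have [zx [Ex ->]] := Bm_deep x (qd_t d); have [zy [Ey ->]] := Bm_deep y (qd_t d).
have [zz [Ez ->]] := Bm_deep z (qd_t d).
rewrite -phiB_lin; try es.
rewrite -trp_lin !Rm; try es.
rewrite -phiB_lin; try es.
by rewrite trp_lin mul_linr.
Qed.

Lemma bmul_assoc d (x y z : Bm d) : bmul (bmul x y) z = bmul x (bmul y z).
Proof.
have [p [[hp1 [hp2 C1]] [[_ [hp3 C2]] [[hp4 [hp5 As]] hpq]]]] :=
  deep_get (deep_and (compat_deep (qd_t d)) (deep_and (compat_deep (qd_mt d))
    (deep_and (assoc_deep (t d)) (deep_le (qd d))))).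
have hpt : lev p (t d) by apply: levT hpq (qd_t d).
have [zx [Ex ->]] := Bm_deep x hpt; have [zy [Ey ->]] := Bm_deep y hpt.
have [zz [Ez ->]] := Bm_deep z hpt.
have L : bmul (bmul (phiB (trp p (t d) zx)) (phiB (trp p (t d) zy))) (phiB (trp p (t d) zz))
  = phiB (mu (t d) (mu (mi (t d)) (trp p (mi (mi (t d))) zx) (trp p (mi (mi (t d))) zy))
                   (trp p (mi (t d)) zz)).
  rewrite (Rm hpt hp5 Ex Ey) -C1 -(trp_comp zz hpq (qd_t d)) Rm; try es.
  by rewrite C2 trp_comp.
have Rr : bmul (phiB (trp p (t d) zx)) (bmul (phiB (trp p (t d) zy)) (phiB (trp p (t d) zz)))
  = phiB (mu (t d) (trp p (mi (t d)) zx)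
                   (mu (mi (t d)) (trp p (mi (mi (t d))) zy) (trp p (mi (mi (t d))) zz))).
  rewrite (Rm hpt hp5 Ey Ez) -C1 -(trp_comp zx hpq (qd_t d)) Rm; try es.
  by rewrite C2 trp_comp.
by rewrite L Rr As.
Qed.

Lemma bmul_1l d (x : Bm d) : bmul (bone d) x = x.
Proof.
have [p [[hp1 [hp2 UL]] hpq]] := deep_get (deep_and (unitl_deep (t d)) (deep_le (qd d))).
have hpt : lev p (t d) by apply: levT hpq (qd_t d).
have [z [Ez ->]] := Bm_deep x hpt.
rewrite /bone -(un_trp hpt) Rm //; last exact: E_un.
by rewrite un_trp // UL.
Qed.

Lemma bmul_1r d (x : Bm d) : bmul x (bone d) = x.
Proof.
have [p [[hp1 [hp2 UR]] hpq]] := deep_get (deep_and (unitr_deep (t d)) (deep_le (qd d))).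
have hpt : lev p (t d) by apply: levT hpq (qd_t d).
have [z [Ez ->]] := Bm_deep x hpt.
rewrite /bone -(un_trp hpt) Rm //; last exact: E_un.
by rewrite un_trp // UR.
Qed.

Lemma rr_l d' d : lev (rr d' d) (t d'). Proof. exact: cb_l. Qed.
Lemma rr_r d' d : lev (rr d' d) (t d). Proof. exact: cb_r. Qed.
Hint Resolve rr_l rr_r : core.

Lemma btr_lin' d' d (h : lev d' d) a (x y : Bm d') :
  btrB d' d (a *: x + y) = a *: btrB d' d x + btrB d' d y.
Proof.
have [zx [Ex ->]] := Bm_deep x (rr_l d' d); have [zy [Ey ->]] := Bm_deep y (rr_l d' d).
rewrite -phiB_lin; try es.
rewrite -trp_lin !(Tr h); try es.
rewrite trp_lin phiB_lin; try es.
all: by [].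
Qed.

Lemma btr_mul' d' d (h : lev d' d) (x y : Bm d') :
  btrB d' d (bmul x y) = bmul (btrB d' d x) (btrB d' d y).
Proof.
have [p [[hp1 [hp2 C1]] [[_ [hp3 C2]] [hpr [hpt1 hpt2]]]]] :=
  deep_get (deep_and (compat_deep (rr_l d' d)) (deep_and (compat_deep (rr_r d' d))
    (deep_and (deep_le (rr d' d)) (deep_and (deep_le (t d')) (deep_le (t d)))))).
have [zx [Ex ->]] := Bm_deep x hpt1; have [zy [Ey ->]] := Bm_deep y hpt1.
rewrite !(Tr h); try es.
rewrite (Rm hpt1 hp2 Ex Ey) (Rm hpt2 hp3 Ex Ey) -C1 -C2 (Tr h); try es.
all: by [].
Qed.

Lemma btr_one' d' d (h : lev d' d) : btrB d' d (bone d') = bone d.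
Proof.
rewrite /bone -(un_trp (rr_l d' d)) -(un_trp (rr_r d' d)) (Tr h); try es.
all: by [].
Qed.

Lemma btr_id' d (h : lev d d) (x : Bm d) : btrB d d x = x.
Proof.
have [z [Ez ->]] := Bm_deep x (levR (t d)).
by rewrite (Tr h).
Qed.

Lemma btr_comp' i j k (h1 : lev i j) (h2 : lev j k) (h3 : lev i k) (x : Bm i) :
  btrB j k (btrB i j x) = btrB i k x.
Proof.
set q := cb (t i) (cb (t j) (t k)).
have q1 : lev q (t i) by exact: cb_l.
have q2 : lev q (t j) by apply: levT (cb_r _ _) (cb_l _ _).
have q3 : lev q (t k) by apply: levT (cb_r _ _) (cb_r _ _).
have [z [Ez ->]] := Bm_deep x q1.
by rewrite (Tr h1) // (Tr h2) // (Tr h3).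
Qed.

Lemma btr_surj d' d (h : lev d' d) (y : Bm d) : exists x, btrB d' d x = y.
Proof.
have [z [Ez ->]] := Bm_deep y (rr_r d' d).
by exists (phiB (trp (rr d' d) (t d') z)); rewrite (Tr h).
Qed.


Definition Balg : algSys R :=
  @AlgSys R I lev levR levT (Defs.codir R M) (Defs.idx_inh R M) Bm
    (@bmul) bone (@bmul_linl) (@bmul_linr) (@bmul_assoc) (@bmul_1l) (@bmul_1r)
    (fun i j _ => btrB i j) (fun i j h => @btr_lin' i j h) (fun i j h => @btr_mul' i j h)
    (fun i j h => @btr_one' i j h) (@btr_id') (@btr_comp').

Lemma Balg_surj : alg_surj Balg.
Proof. by move=> i j h y; apply: (btr_surj h). Qed.

Lemma Balg_comm : proAlg_comm A -> alg_comm Balg.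
Proof.
move=> C d x y; rewrite /=.
have [p [[hp1 Cm] hpq]] := deep_get (deep_and (comm_deep (t d) C) (deep_le (qd d))).
have hpt : lev p (t d) by apply: levT hpq (qd_t d).
have [zx [Ex ->]] := Bm_deep x hpt; have [zy [Ey ->]] := Bm_deep y hpt.
by rewrite !Rm // Cm.
Qed.

Lemma Balg_fg : (forall i, exists n (g : 'I_n -> Ob i), (forall k, E (g k)) /\
   forall x, E x -> exists c : 'I_n -> R, x = \sum_(k < n) c k *: g k) ->
  alg_fin_gen Balg.
Proof.
move=> H d; have [n [g [Eg Hg]]] := H (t d).
exists n, (fun k => phiB (g k)) => f.
have [x [Ex ->]] := Bm_rep f.
have [c ->] := Hg x Ex.
exists c; apply: val_inj.
have vlin : forall a (u v : Bm d), val (a *: u + v) = a *: val u + val v by [].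
rewrite (lin_sum vlin) val_phiB; last first.
  elim/big_ind: _ => //; first exact: E_0.
    by move=> u v Eu Ev; rewrite -[u]scale1r; apply: E_lin.
  by move=> k _; rewrite -[_ *: _]addr0; apply: E_lin => //; exact: E_0.
rewrite (lin_sum (@Phi_lin d)).
by apply: eq_bigr => k _; rewrite val_phiB.
Qed.

Lemma E_s i (x : Ob (s i)) : E (trp (s i) i x).
Proof. by exists x. Qed.

Lemma phiH_compat j j' (h : lev j' j) :
  @germ1 R M (Bm j) (s (t j')) (s (t j)) (fun x : Ob (s (t j')) => btrB j' j (phiB (trp (s (t j')) (t j') x)))
        (fun x : Ob (s (t j)) => phiB (trp (s (t j)) (t j) x)).
Proof.
set q := rr j' j.
set k := cb (s q) (cb (s (t j')) (s (t j))).
have k1 : lev k (s (t j')) by apply: levT (cb_r _ _) (cb_l _ _).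
have k2 : lev k (s (t j)) by apply: levT (cb_r _ _) (cb_r _ _).
have k3 : lev k (s q) by apply: cb_l.
have kq : lev k q by apply: levT k3 (s_le q).
exists k, k1, k2 => x.
rewrite -!trpE !trp_comp //; try (apply: levT; [exact: k1| ]; by []);
  try (apply: levT; [exact: k2| ]; by []).
rewrite -(trp_comp x kq (rr_l j' j)) -(trp_comp x kq (rr_r j' j)) (Tr h) //.
- exact: rr_l.
- exact: rr_r.
- rewrite -(trp_comp x k3 (s_le q)); exact: E_s.
Qed.


Lemma phiH_lin d a (x y : Ob (s (t d))) :
  phiB (trp (s (t d)) (t d) (a *: x + y))
  = a *: phiB (trp (s (t d)) (t d) x) + phiB (trp (s (t d)) (t d) y).
Proof. rewrite trp_lin phiB_lin //; exact: E_s. Qed.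

Definition phiH : proHom R M (sysOf R Balg) :=
  @ProHom R M (sysOf R Balg) (fun d => s (t d))
    (fun d x => phiB (trp (s (t d)) (t d) x))
    (@phiH_lin) (fun j j' h => phiH_compat h).

Definition upair i : Dom i := (exist _ (un (t i)) (E_un _), exist _ (un (t i)) (E_un _)).

Lemma psi_phiB i (x : Ob (t i)) : E x -> val (phiB x) (upair i) = trp (t i) i x.
Proof. by move=> Ex; rewrite val_phiB // Phi_at Phi_un. Qed.

Lemma psiH_lin i a (x y : Bm i) :
  val (a *: x + y) (upair i) = a *: val x (upair i) + val y (upair i).
Proof. by []. Qed.

Lemma psiH_compat j j' (h : lev j' j) :
  @germ1 R (sysOf R Balg) (Ob j) j' j
   (fun f : Bm j' => tr R M j' j h (val f (upair j')))
   (fun f : Bm j => val f (upair j)).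
Proof.
exists j', (levR j'), h => f /=.
have [z [Ez ->]] := Bm_deep f (rr_l j' j).
rewrite -trpE (Tr (levR j')) // (Tr h) // !psi_phiB; try es.
by rewrite !trp_comp //; apply: levT (t_d j') h.
Qed.

Definition psiH : proHom R (sysOf R Balg) M :=
  @ProHom R (sysOf R Balg) M (fun i => i)
    (fun i (f : Bm i) => val f (upair i))
    (@psiH_lin) (fun j j' h => psiH_compat h).

Lemma Balg_iso : proAlgIso A Balg.
Proof.
exists phiH, psiH; split; [split|split].
- move=> i; exists (s (t i)), (levR _), (levT (s_le (t i)) (t_d i)) => x.
  rewrite -!trpE trp_id.
  change (val (phiB (trp (s (t i)) (t i) x)) (upair i) = trp (s (t i)) i x).
  rewrite psi_phiB; last exact: E_s.
  rewrite trp_comp //; exact: levT (s_le _) _.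
- move=> d; set c := s (t d).
  have hcd : lev c d by apply: levT (s_le (t d)) (t_d d).
  exists c, (levR c), hcd => f.
  have [z [Ez ->]] := Bm_deep f (rr_l c d).
  have hq : lev (rr c d) c by apply: levT (rr_l c d) (t_d c).
  change (phiB (trp c (t d) (val (btrB c c (phiB (trp (rr c d) (t c) z))) (upair c)))
    = btrB c d (phiB (trp (rr c d) (t c) z))).
  rewrite (Tr (levR c)) // (Tr hcd) // psi_phiB; try es.
  by rewrite !trp_comp //; try (apply: levT (t_d c) _; exact: s_le); apply: s_le.
- move=> j /=; set c := s (t j).
  have [p [[hp1 [hp2 Cc]] [hpq hpc]]] := deep_get (deep_and (compat_deep (s_le (t j)))
     (deep_and (deep_le (s (qd j))) (deep_le c))).
  have hpq' : lev p (qd j) by apply: levT hpq (s_le _).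
  exists p, hp1, hp1, hpc, hpc => x y.
  have hct : lev c (t j) by exact: s_le.
  rewrite -!trpE Cc !trp_comp //.
  rewrite -(trp_comp x hpq' (qd_t j)) -(trp_comp y hpq' (qd_t j)) Rm //.
  + by rewrite !trp_comp.
  + by rewrite -(trp_comp x hpq (s_le _)); exact: E_s.
  + by rewrite -(trp_comp y hpq (s_le _)); exact: E_s.
- move=> j; change (phiB (trp (s (t j)) (t j) (un (s (t j)))) = bone j).
  by rewrite un_trp //; exact: s_le.
Qed.

Lemma PF_E : pro_finite M -> forall i, exists n (g : 'I_n -> Ob i),
  (forall k, E (g k)) /\
  forall x, E x -> exists c : 'I_n -> R, x = \sum_(k < n) c k *: g k.
Proof.
move=> [N [fgN [phi [psi [inv1 _]]]]] i.
have [k0 [h1 [h2 Hk]]] := inv1 i.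
have [m [g1 [g2 Hm]]] := hmap_compat R N M psi i (s i) (s_le i).
have [k3 [e1 [e2 He]]] := hmap_compat R M N phi (hidx R N M psi i) m g2.
have [nn [v Hv]] := fgN m.
exists nn, (fun k => hmap R N M psi i (tr R N m _ g2 (v k))); split.
  by move=> k; exists (hmap R N M psi (s i) (tr R N m _ g1 (v k))); rewrite (trpE (s_le i)) Hm.
move=> x Ex.
have [z [_ ez]] := E_lift Ex (levT (cb_l k0 k3) h2).
have [c ec] := Hv (hmap R M N phi m (tr R M _ _ e1 (trp (cb k0 k3) k3 z))).
exists c.
have lin1 : forall a u w, hmap R N M psi i (tr R N m _ g2 (a *: u + w))
   = a *: hmap R N M psi i (tr R N m _ g2 u) + hmap R N M psi i (tr R N m _ g2 w).
  by move=> a u w; rewrite tr_lin hmap_lin.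
rewrite -(lin_sum lin1) -ec He -ez.
rewrite -(trpE e2) trp_comp //.
by rewrite -(trp_comp z (cb_l k0 k3) h1) (trpE h1) Hk -(trpE h2) trp_comp.
Qed.

End Main.

Theorem theorem2p30 (R : comPzRingType) (A : proAlg R) :
  mittag_leffler (asys A) ->
  (exists B : algSys R, alg_surj B /\ proAlgIso A B)
  /\ (pro_finite (asys A) ->
        exists B : algSys R, alg_surj B /\ alg_fin_gen B /\ proAlgIso A B)
  /\ (proAlg_comm A ->
        exists B : algSys R, alg_surj B /\ alg_comm B /\ proAlgIso A B)
  /\ (proAlg_comm A -> pro_finite (asys A) ->
        exists B : algSys R,
          alg_surj B /\ alg_comm B /\ alg_fin_gen B /\ proAlgIso A B).
Proof.
move=> ML; have [s [sle sst]] := ML_s ML.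
set B := @Balg R A s sle sst.
have S : alg_surj B := @Balg_surj R A s sle sst.
have Iso : proAlgIso A B := @Balg_iso R A s sle sst.
have FG : pro_finite (asys A) -> alg_fin_gen B :=
  fun PF => @Balg_fg R A s sle sst (@PF_E R A s sle sst PF).
have CM : proAlg_comm A -> alg_comm B := @Balg_comm R A s sle sst.
split; [|split; [|split]].
- by exists B.
- by move=> PF; exists B; split => //; split => //; apply: FG.
- by move=> C; exists B; split => //; split => //; apply: CM.
- by move=> C PF; exists B; split => //; split; [apply: CM | split => //; apply: FG].
Qed.
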